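(* Let $\mathcal{I}$ be an instance of vertex cover and let $\mathcal{T}_S(\mathcal{I})$ be a branch-and-bound tree generated by strong-branching (product score) with worst-bound node selection, ties broken by largest depth. Let $N$ be a node of $\mathcal{T}_S(\mathcal{I})$ whose LP optimal value is less than $\mathrm{OPT}(\mathcal{I})$. Then strong-branching branches at $N$ on some $v\notin I(\mathcal{I},N)$, and both children $N_{v,0}$ and $N_{v,1}$ have LP optimal value at least $\tfrac12$ more than that of $N$.
   Context: Vertex cover IP for a graph $G=(V,E)$: minimize $\sum_v x_v$ subject to $x_u+x_v\ge1$ ($uv\in E$), $x\in\{0,1\}^V$; LP relaxation uses $x\in[0,1]^V$; $\mathrm{OPT}(\mathcal{I})$ is the IP optimal value. Each node $N$ is the LP relaxation plus fixings of variables to $0$ or $1$ made on the path from the root; $N_{v,0},N_{v,1}$ denote the children obtained by adding $x_v=0$, $x_v=1$. The LP solver returns some optimal solution at each node. Strong branching with product score: at $N$ with LP value $z$ and returned solution $\hat x$, for each $j$ with $\hat x_j$ fractional compute children's LP values $z^0_j,z^1_j$ ($+\infty$ if infeasible), $\Delta^-_j=z^0_j-z$, $\Delta^+_j=z^1_j-z$, and branch on a maximizer of $\mathrm{score}_P(j)=\Delta^+_j\Delta^-_j$ (with $0\cdot\infty=0$). Worst-bound rule: process an open node of smallest LP value. $I(\mathcal{I},N)$ is the union, over all optimal solutions $x$ of the LP at $N$, of $\{j:x_j\in\{0,1\}\}$. *)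

(* Defs.v *)
From HB Require Import structures.
From mathcomp Require Import all_boot all_order all_algebra.
From mathcomp Require Import all_classical all_reals.
From mathcomp Require Import ereal.

Set Implicit Arguments. Unset Strict Implicit. Unset Printing Implicit Defensive.
Import Order.TTheory GRing.Theory Num.Theory.
Local Open Scope classical_set_scope.
Local Open Scope ring_scope.

Section VertexCoverBB.
Variables (R : realType) (V : finType) (e : rel V).

(* A node of the branch-and-bound tree is the (ordered) list of fixings
   x_v = b made on the path from the root; the root is [::];
   its depth is its size. *)
Definition node := seq (V * bool).

Definition child (N : node) (v : V) (b : bool) : node := rcons N (v, b).

Definition lp_feas (N : node) (x : V -> R) : Prop :=
  (forall u v, e u v -> 1 <= x u + x v) /\
  (forall v, 0 <= x v <= 1) /\
  (forall v b, (v, b) \in N -> x v = (b : nat)%:R).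

Definition obj (x : V -> R) : R := \sum_(v : V) x v.

(* LP optimal value at N (+oo if infeasible) *)
Definition lp_val (N : node) : \bar R :=
  ereal_inf [set (obj x)%:E | x in lp_feas N].

Definition lp_opt (N : node) (x : V -> R) : Prop :=
  lp_feas N x /\ forall y, lp_feas N y -> obj x <= obj y.

Definition integral (x : V -> R) : Prop := forall v, x v = 0 \/ x v = 1.

Definition fractional (x : V -> R) (v : V) : Prop := 0 < x v < 1.

Definition OPT : \bar R :=
  ereal_inf [set (obj x)%:E | x in [set x | lp_feas [::] x /\ integral x]].

Definition Iset (N : node) : set V :=
  [set j | exists x, lp_opt N x /\ (x j = 0 \/ x j = 1)].

Definition scoreP (N : node) (j : V) : \bar R :=
  ((lp_val (child N j true) - lp_val N) * (lp_val (child N j false) - lp_val N))%E.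

Definition sb_choice (N : node) (xhat : V -> R) (v : V) : Prop :=
  fractional xhat v /\
  forall j, fractional xhat j -> (scoreP N j <= scoreP N v)%E.

Definition wb_select (open : seq node) (N : node) : Prop :=
  N \in open /\
  forall M, M \in open ->
    (lp_val N <= lp_val M)%E /\ (lp_val N = lp_val M -> (size M <= size N)%N).

Record bb_state := BBState {
  bb_open : seq node;
  bb_inc : \bar R;                  (* incumbent value (+oo if none) *)
  bb_nodes : seq node;
  bb_branch : seq (node * V)
}.

Definition bb_init : bb_state := BBState [:: [::]] +oo%E [:: [::]] [::].

Inductive bb_step : bb_state -> bb_state -> Prop :=
| bb_prune s N :
    wb_select (bb_open s) N ->
    (bb_inc s <= lp_val N)%E ->
    bb_step s (BBState (rem N (bb_open s)) (bb_inc s) (bb_nodes s) (bb_branch s))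
| bb_integral s N xhat :
    wb_select (bb_open s) N ->
    (lp_val N < bb_inc s)%E ->
    lp_opt N xhat -> integral xhat ->
    bb_step s (BBState (rem N (bb_open s)) (obj xhat)%:E (bb_nodes s) (bb_branch s))
| bb_branch_step s N xhat v :
    wb_select (bb_open s) N ->
    (lp_val N < bb_inc s)%E ->
    lp_opt N xhat -> ~ integral xhat ->
    sb_choice N xhat v ->
    bb_step s (BBState (child N v false :: child N v true :: rem N (bb_open s))
                       (bb_inc s)
                       (child N v false :: child N v true :: bb_nodes s)
                       ((N, v) :: bb_branch s)).

Inductive bb_reach : bb_state -> Prop :=
| bb_reach_init : bb_reach bb_init
| bb_reach_step s s' : bb_reach s -> bb_step s s' -> bb_reach s'.

(* a complete run: reachable state with no open node left; its tree
   T_S(I) consists of bb_nodes, with branchings bb_branch *)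
Definition bb_complete (s : bb_state) : Prop := bb_reach s /\ bb_open s = [::].

End VertexCoverBB.

(* Main.v *)
Require Import Defs.
From HB Require Import structures.
From mathcomp Require Import all_boot all_order all_algebra.
From mathcomp Require Import all_classical all_reals.
From mathcomp Require Import ereal lra.
Import Order.TTheory GRing.Theory Num.Theory.
Local Open Scope classical_set_scope.
Local Open Scope ring_scope.
Set Implicit Arguments. Unset Strict Implicit.

Section LP.
Variables (R : realType) (V : finType) (e : rel V) (N : node V).

Definition rnd (y : V -> R) : V -> R :=
  fun u => if y u < 2^-1 then 0 else if 2^-1 < y u then 1 else 2^-1.

Definition nonhalf (y : V -> R) : pred V :=
  fun u => (y u != 0) && (y u != 2^-1) && (y u != 1).

Definition halfint (w : V -> R) := forall u, w u = 0 \/ w u = 2^-1 \/ w u = 1.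

Lemma trich (a : R) : a < 2^-1 \/ a = 2^-1 \/ 2^-1 < a.
Proof. case: (ltgtP a (2^-1)); auto. Qed.

Lemma rnd_lt y u : y u < 2^-1 -> rnd y u = 0.
Proof. by rewrite /rnd => ->. Qed.
Lemma rnd_gt y u : 2^-1 < y u -> rnd y u = 1.
Proof. rewrite /rnd => h. have -> : (y u < 2^-1) = false by apply/negbTE; rewrite -leNgt ltW. by rewrite h. Qed.
Lemma rnd_eq y u : y u = 2^-1 -> rnd y u = 2^-1.
Proof. by rewrite /rnd => ->; rewrite ltxx. Qed.

Arguments rnd_lt {y u}. Arguments rnd_gt {y u}. Arguments rnd_eq {y u}.
Lemma rnd_half y : halfint (rnd y).
Proof.
move=> u; case: (trich (y u)) => [h|[h|h]].
- by left; rewrite rnd_lt.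
- by right; left; rewrite rnd_eq.
- by right; right; rewrite rnd_gt.
Qed.

Lemma rnd_0 y u : y u = 0 -> rnd y u = 0.
Proof. move=> h; apply: rnd_lt; rewrite h; lra. Qed.
Lemma rnd_1 y u : y u = 1 -> rnd y u = 1.
Proof. move=> h; apply: rnd_gt; rewrite h; lra. Qed.

Arguments rnd_0 {y u}. Arguments rnd_1 {y u}.
Lemma feas_rnd y : lp_feas e N y -> lp_feas e N (rnd y).
Proof.
case=> hE [hB hF]; split; [|split].
- move=> u v /hE h.
  case: (trich (y u)) => [hu|[hu|hu]]; case: (trich (y v)) => [hv|[hv|hv]];
  rewrite ?(rnd_lt hu) ?(rnd_eq hu) ?(rnd_gt hu) ?(rnd_lt hv) ?(rnd_eq hv) ?(rnd_gt hv); lra.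
- move=> v; case: (trich (y v)) => [hv|[hv|hv]];
  rewrite ?(rnd_lt hv) ?(rnd_eq hv) ?(rnd_gt hv); apply/andP; split; lra.
- move=> v b /hF h; case: b h => /= h.
  + by rewrite (rnd_1 h).
  + by rewrite (rnd_0 h).
Qed.

Lemma obj_comb (a b : R) (f g h : V -> R) :
  (forall u, f u = a * g u + b * h u) -> obj f = a * obj g + b * obj h.
Proof.
move=> H; rewrite /obj (eq_bigr _ (fun u _ => H u)) big_split /=.
by rewrite -!mulr_sumr.
Qed.

Lemma nonhalf_rnd y : ~~ [exists u, nonhalf y u] -> rnd y = y.
Proof.
move=> /existsPn H; apply/funext => u; move: (H u); rewrite /nonhalf.
case: (eqVneq (y u) 0) => [h _|h0]; first by rewrite rnd_0.
case: (eqVneq (y u) (2^-1)) => [h _|h1]; first by rewrite rnd_eq.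
case: (eqVneq (y u) 1) => [h _|h2] //; first by rewrite rnd_1.
Qed.

Lemma decomp y : lp_feas e N y -> [exists u, nonhalf y u] ->
  exists y1 mu, 0 < mu < 1 /\ lp_feas e N y1 /\
    obj y = mu * obj y1 + (1 - mu) * obj (rnd y) /\
    (#|[pred u | nonhalf y1 u]| < #|[pred u | nonhalf y u]|)%N /\
    (forall u, y u = 0 -> y1 u = 0) /\ (forall u, y u = 1 -> y1 u = 1).
Proof.
move=> hy /existsP [u0 hu0].
pose fold u := if y u < 2^-1 then y u else 1 - y u.
have [u1 [hu1 hmax]] : exists u, nonhalf y u /\ forall w, nonhalf y w -> fold w <= fold u.
  by case: (arg_maxP fold hu0) => i Pi H; exists i.
case: hy => hE [hB hF].
set M := fold u1.
have hM : 0 < M < 2^-1.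
  move: hu1 (hB u1); rewrite /nonhalf /M /fold => /andP [/andP [h0 h1] h2] /andP [b0 b1].
  case: (trich (y u1)) => [h|[h|h]].
  - rewrite h. have: 0 < y u1 by rewrite lt_def h0 b0. move=> ?; apply/andP; split; lra.
  - by rewrite h eqxx in h1.
  - have -> : (y u1 < 2^-1) = false by apply/negbTE; rewrite -leNgt ltW.
    have: y u1 < 1 by rewrite lt_def eq_sym h2 b1. move=> ?; apply/andP; split; lra.
case/andP: hM => M0 M1.
have lowb u : y u < 2^-1 -> y u <= M.
  move=> h; case: (eqVneq (y u) 0) => [->|hn]; first lra.
  have : nonhalf y u by rewrite /nonhalf hn /=; apply/andP; split; apply/negP => /eqP ?; lra.
  by move=> /hmax; rewrite /fold h.
have upb u : 2^-1 < y u -> 1 - y u <= M.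
  move=> h; case: (eqVneq (y u) 1) => [->|hn]; first lra.
  have : nonhalf y u by rewrite /nonhalf hn andbT; apply/andP; split; apply/negP => /eqP ?; lra.
  move=> /hmax; rewrite /fold.
  have -> // : (y u < 2^-1) = false by apply/negbTE; rewrite -leNgt ltW.
pose k := (2 * M)^-1.
have Mk : M * k = 2^-1.
  rewrite /k invfM mulrA mulrC mulrA mulVf ?mul1r //; lra.
have k0 : 0 < k by rewrite /k invr_gt0; lra.
pose y1 u := if y u < 2^-1 then y u * k else if 2^-1 < y u then 1 - (1 - y u) * k else 2^-1.
have y1lt u : y u < 2^-1 -> y1 u = y u * k by rewrite /y1 => ->.
have y1gt u : 2^-1 < y u -> y1 u = 1 - (1 - y u) * k.
  move=> h; rewrite /y1 h.
  have -> // : (y u < 2^-1) = false by apply/negbTE; rewrite -leNgt ltW.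
have y1eq u : y u = 2^-1 -> y1 u = 2^-1 by rewrite /y1 => ->; rewrite ltxx.
have upk w : 2^-1 < y w -> (1 - y w) * k <= 2^-1.
  move=> h; rewrite -Mk; apply: ler_wpM2r; [lra| exact: upb].
have lowk w : y w < 2^-1 -> y w * k <= 2^-1.
  move=> h; rewrite -Mk; apply: ler_wpM2r; [lra| exact: lowb].
have fix1 u : ~~ nonhalf y u -> y1 u = y u.
  rewrite /nonhalf.
  case: (eqVneq (y u) 0) => [h _|h0]; first by rewrite y1lt h ?mul0r //; lra.
  case: (eqVneq (y u) (2^-1)) => [h _|h1]; first by rewrite y1eq.
  case: (eqVneq (y u) 1) => [h _|h2] //; first by rewrite y1gt h ?subrr ?mul0r ?subr0 //; lra.
exists y1, (2 * M); split; first by apply/andP; split; lra.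
split; [split; [|split]|split; [|split; [|split]]].
- move=> u v /hE h.
  have bu := hB u; have bv := hB v; case/andP: bu => bu0 bu1; case/andP: bv => bv0 bv1.
  case: (trich (y u)) => [hu|[hu|hu]]; case: (trich (y v)) => [hv|[hv|hv]];
  rewrite ?(y1lt _ hu) ?(y1eq _ hu) ?(y1gt _ hu) ?(y1lt _ hv) ?(y1eq _ hv) ?(y1gt _ hv);
  try lra.
  + have : 0 <= (y u + y v - 1) * k by apply: mulr_ge0; lra.
    lra.
  + have := upk _ hv; lra.
  + have : 0 <= (y u + y v - 1) * k by apply: mulr_ge0; lra.
    lra.
  + have := upk _ hu; lra.
  + have := upk _ hu; have := upk _ hv; lra.
- move=> u; have := hB u => /andP [b0 b1]; apply/andP.
  case: (trich (y u)) => [hu|[hu|hu]];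
  rewrite ?(y1lt _ hu) ?(y1eq _ hu) ?(y1gt _ hu); split; try lra.
  + by apply: mulr_ge0; lra.
  + have := lowb _ hu; nra.
  + have := upb _ hu; nra.
  + nra.
- move=> v b /hF h; case: b h => /= h.
  + rewrite y1gt; rewrite h; [rewrite subrr mul0r subr0 //|lra].
  + rewrite y1lt; rewrite h; [by rewrite mul0r|lra].
- apply: obj_comb => u.
  case: (trich (y u)) => [hu|[hu|hu]];
  rewrite ?(y1lt _ hu) ?(y1eq _ hu) ?(y1gt _ hu) ?(rnd_lt hu) ?(rnd_eq hu) ?(rnd_gt hu).
  + rewrite mulr0 addr0 mulrCA -mulrA Mk; lra.
  + rewrite hu; lra.
  + rewrite mulr1 mulrBr mulr1 mulrCA -mulrA Mk; lra.
- apply: proper_card; apply/properP; split.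
  + apply/fintype.subsetP => u; rewrite !inE; apply: contraLR => Hn.
    rewrite /nonhalf (fix1 u Hn); exact Hn.
  + exists u1; first by rewrite inE.
    rewrite inE /nonhalf; apply/negP => /andP [/andP [_ /negP H] _]; apply: H; apply/eqP.
    move: hu1; rewrite /nonhalf => /andP [/andP [_ h1] _].
    case: (trich (y u1)) => [hu|[hu|hu]].
    * rewrite (y1lt _ hu) -Mk /M /fold hu //.
    * by rewrite hu eqxx in h1.
    * rewrite (y1gt _ hu).
      have hM' : M = 1 - y u1.
        rewrite /M /fold.
        have -> // : (y u1 < 2^-1) = false by apply/negbTE; rewrite -leNgt ltW.
      rewrite -hM' Mk; lra.
- move=> u h; rewrite y1lt h ?mul0r //; lra.
- move=> u h; rewrite y1gt h ?subrr ?mul0r ?subr0 //; lra.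
Qed.


Arguments decomp {y}. Arguments feas_rnd {y}. Arguments nonhalf_rnd {y}.
Lemma halfint_obj w : halfint w -> exists k : nat, obj w * 2 = k%:R.
Proof.
move=> hw.
exists (\sum_(u : V) (if w u == 0%R then 0 else if w u == 1%R then 2 else 1))%N.
rewrite /obj mulr_suml natr_sum; apply: eq_bigr => u _.
case: (hw u) => [->|[->|->]]; rewrite ?eqxx //=.
- by rewrite mul0r.
- have -> : (2^-1 == 0 :> R) = false by apply/negbTE; apply/negP => /eqP; lra.
  have -> : (2^-1 == 1 :> R) = false by apply/negbTE; apply/negP => /eqP; lra.
  rewrite mulVf //; lra.
- have -> : (1 == 0 :> R) = false by apply/negbTE; apply/negP => /eqP; lra.
  by rewrite mul1r.
Qed.

Lemma half_round n : forall y, (#|[pred u | nonhalf y u]| <= n)%N -> lp_feas e N y ->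
  exists w, lp_feas e N w /\ halfint w /\ obj w <= obj y /\
    (forall u, y u = 0 -> w u = 0) /\ (forall u, y u = 1 -> w u = 1).
Proof.
elim: n => [|n IH] y hc hy.
- case: (boolP [exists u, nonhalf y u]) => hex.
  + have [y1 [mu [_ [_ [_ [hlt _]]]]]] := decomp hy hex.
    by move: (leq_trans hlt hc); rewrite ltn0.
  + exists (rnd y); split; first exact: feas_rnd.
    split; first exact: rnd_half.
    rewrite (nonhalf_rnd hex); split => //.
- case: (boolP [exists u, nonhalf y u]) => hex.
  + have [y1 [mu [hmu [hf1 [hobj [hlt [h0 h1]]]]]]] := decomp hy hex.
    case/andP: hmu => mu0 mu1.
    case: (lerP (obj (rnd y)) (obj y)) => hr.
    * exists (rnd y); split; first exact: feas_rnd.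
      split; first exact: rnd_half.
      split => //; split => u hu; [exact: rnd_0|exact: rnd_1].
    * have hc1 : (#|[pred u | nonhalf y1 u]| <= n)%N by rewrite -ltnS (leq_trans hlt hc).
      have [w [hw1 [hw2 [hw3 [hw4 hw5]]]]] := IH y1 hc1 hf1.
      exists w; split => //; split => //; split.
      -- have : obj y1 < obj y by nra.
         move=> ?; lra.
      -- by split => u hu; [apply: hw4; apply: h0|apply: hw5; apply: h1].
  + exists (rnd y); split; first exact: feas_rnd.
    split; first exact: rnd_half.
    rewrite (nonhalf_rnd hex); split => //.
Qed.

Lemma round_opt y : lp_opt e N y -> lp_opt e N (rnd y).
Proof.
case=> hy hmin.
case: (boolP [exists u, nonhalf y u]) => hex; last by rewrite (nonhalf_rnd hex).
have [y1 [mu [hmu [hf1 [hobj _]]]]] := decomp hy hex.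
case/andP: hmu => mu0 mu1.
split; first exact: feas_rnd.
move=> z hz.
have a1 := hmin _ hf1. have a2 := hmin _ (feas_rnd hy). have a3 := hmin _ hz.
have : obj (rnd y) <= obj y by nra.
move=> ?; lra.
Qed.

End LP.

Section LP2.
Variables (R : realType) (V : finType) (e : rel V).

Lemma lp_val_opt N x : lp_opt e N x -> lp_val R e N = (obj x)%:E.
Proof.
case=> hx hmin; apply/le_anti/andP; split.
- by apply: ereal_inf_lbound; exists x.
- apply: le_ereal_inf_tmp => _ [y hy <-]; rewrite lee_fin; exact: hmin.
Qed.

Lemma feas_child N v (b : bool) (y : V -> R) : lp_feas e (child N v b) y -> lp_feas e N y /\ y v = b%:R.
Proof.
case=> h1 [h2 h3]; split; last by apply: h3; rewrite mem_rcons inE eqxx.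
split => //; split => // w c hw; apply: h3; by rewrite mem_rcons inE hw orbT.
Qed.

Lemma child_feas N v (b : bool) (y : V -> R) : lp_feas e N y -> y v = b%:R -> lp_feas e (child N v b) y.
Proof.
case=> h1 [h2 h3] hv; split => //; split => // w c.
rewrite mem_rcons inE => /orP [/eqP [-> ->] //|]; exact: h3.
Qed.

Lemma gap N (xh : V -> R) v : lp_opt e N xh -> ~ Iset R e N v ->
  forall y, lp_feas e N y -> (y v = 0 \/ y v = 1) -> obj xh + 2^-1 <= obj y.
Proof.
move=> hxh hI y hy hyv.
have [w [hw1 [hw2 [hw3 [hw4 hw5]]]]] := half_round (leqnn _) hy.
have [w0 [hw01 [hw02 [hw03 _]]]] := half_round (leqnn _) hxh.1.
have e0 : obj w0 = obj xh by apply/le_anti; rewrite hw03 (hxh.2 _ hw01).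
have ge : obj xh <= obj w := hxh.2 _ hw1.
have gt : obj xh < obj w.
  rewrite lt_def ge andbT; apply/negP => /eqP heq.
  apply: hI; exists w; split.
  + split => // z hz; rewrite heq; exact: hxh.2.
  + by case: hyv => h; [left; apply: hw4|right; apply: hw5].
have [k hk] := halfint_obj hw2. have [k0 hk0] := halfint_obj hw02.
have : (k0 < k)%N by rewrite -(ltr_nat R) -hk -hk0 e0; lra.
move=> h. have : ((k0 + 1)%:R <= k%:R :> R) by rewrite ler_nat addn1.
rewrite natrD -hk -hk0 e0 => ?; lra.
Qed.

Lemma child_gap N (xh : V -> R) v b : lp_opt e N xh -> ~ Iset R e N v ->
  (lp_val R e N + (2^-1)%:E <= lp_val R e (child N v b))%E.
Proof.
move=> hxh hI; rewrite (lp_val_opt hxh) -EFinD.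
apply: le_ereal_inf_tmp => _ [y hy <-]; rewrite lee_fin.
have [hy1 hy2] := feas_child hy.
apply: (gap hxh hI hy1); rewrite hy2; by case: b {hy} hy2 => /=; auto.
Qed.

End LP2.

Section LP3.
Variables (R : realType) (V : finType) (e : rel V).

Lemma opt_obj N (x y : V -> R) : lp_opt e N x -> lp_opt e N y -> obj x = obj y.
Proof. move=> hx hy; apply/le_anti/andP; split; [exact: hx.2 _ hy.1 | exact: hy.2 _ hx.1]. Qed.

Lemma all_I_int N (xh : V -> R) : lp_opt e N xh -> (forall j, Iset R e N j) ->
  forall s : seq V, exists c : V -> R, lp_opt e N c /\ forall i, i \in s -> c i = 0 \/ c i = 1.
Proof.
move=> hxh hall; elim=> [|j s [c [hc hcs]]]; first by exists xh.
have [b [hb hbj]] := hall j.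
have hc' := round_opt hc.
set c' := rnd c in hc'.
have hc's : forall i, i \in s -> c' i = 0 \/ c' i = 1.
  by move=> i /hcs [h|h]; [left; exact: rnd_0 | right; exact: rnd_1].
case: (rnd_half c j) => [hj|[hj|hj]];
  try (exists c'; split => // i; rewrite inE => /orP [/eqP ->|/hc's //]; by auto).
pose y u := 3/4 * c' u + 4^-1 * b u.
case: (hc'.1) => E1 [B1 F1]; case: (hb.1) => E2 [B2 F2].
have hy : lp_feas e N y.
  split; [|split].
  - move=> u v h; have := E1 u v h; have := E2 u v h; rewrite /y; lra.
  - move=> u; move: (B1 u) (B2 u) => /andP [? ?] /andP [? ?]; apply/andP; split; rewrite /y; lra.
  - move=> u bb h; rewrite /y (F1 _ _ h) (F2 _ _ h); case: bb {h} => /=; lra.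
have oy : obj y = obj xh.
  rewrite (obj_comb (h := b) (g := c') (a := 3/4) (b := 4^-1)) // (opt_obj hc' hxh) (opt_obj hb hxh); lra.
have hyo : lp_opt e N y by split => // z hz; rewrite oy; exact: hxh.2.
exists (rnd y); split; first exact: round_opt.
move=> i; rewrite inE => /orP [/eqP ->|his].
- case: hbj => h.
  + left; apply: rnd_lt; rewrite /y /c' hj h; lra.
  + right; apply: rnd_gt; rewrite /y /c' hj h; lra.
- move: (B2 i) => /andP [? ?].
  case: (hc's i his) => h.
  + left; apply: rnd_lt; rewrite /y h; lra.
  + right; apply: rnd_gt; rewrite /y h; lra.
Qed.

Lemma notI N (xh : V -> R) : lp_opt e N xh -> (lp_val R e N < OPT R e)%E ->
  exists j, ~ Iset R e N j.
Proof.
move=> hxh hz; apply: contrapT => hne.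
have hall : forall j, Iset R e N j by move=> j; apply: contrapT => hj; apply: hne; exists j.
have [c [hc hci]] := all_I_int hxh hall (enum V).
have : (OPT R e <= (obj c)%:E)%E.
  apply: ereal_inf_lbound; exists c => //; split; last by move=> i; apply: hci; rewrite mem_enum.
  case: hc.1 => h1 [h2 h3]; split => //; split => // v bb; rewrite in_nil.
move: hz; rewrite (lp_val_opt hxh) (opt_obj hxh hc) => h1 h2.
have := lt_le_trans h1 h2; by rewrite ltxx.
Qed.

Lemma pos_gap (a : \bar R) (z : R) : (z%:E + (2^-1)%:E <= a)%E -> (0 < a - z%:E)%E.
Proof.
case: a => [r| |] h.
- rewrite -EFinD lee_fin in h; rewrite -EFinB lte_fin; lra.
- by rewrite /= ?addye // ?lte_pinfty ?ltry.
- move: h; by rewrite -EFinD leeNy_eq.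
Qed.

Lemma sb_notI N (xh : V -> R) v : lp_opt e N xh -> sb_choice e N xh v ->
  (lp_val R e N < OPT R e)%E -> ~ Iset R e N v.
Proof.
move=> hxh [hfv hmax] hz hIv.
have [j hj] := notI hxh hz.
have hfj : fractional xh j.
  case: (hxh) => [[_ [hB _]] _]; have := hB j => /andP [b0 b1].
  rewrite /fractional; apply/andP; split.
  - rewrite lt_def b0 andbT; apply/negP => /eqP h; apply: hj; exists xh; split => //; auto.
  - rewrite lt_def b1 andbT; apply/negP => /eqP h; apply: hj; exists xh; split => //; auto.
have sj : (0 < scoreP R e N j)%E.
  rewrite /scoreP (lp_val_opt hxh); apply: mule_gt0; apply: pos_gap;
  rewrite -(lp_val_opt hxh); apply: child_gap hxh hj.
have sv := lt_le_trans sj (hmax j hfj).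
case: hIv => x [hx hxv].
have eqc (b : bool) : x v = b%:R -> lp_val R e (child N v b) = lp_val R e N.
  move=> hb; apply/le_anti/andP; split.
  - rewrite (lp_val_opt hx); apply: ereal_inf_lbound; exists x => //; apply: child_feas => //; exact hx.1.
  - rewrite (lp_val_opt hxh); apply: le_ereal_inf_tmp => _ [y hy <-]; rewrite lee_fin; apply: hxh.2; exact: (feas_child hy).1.
move: sv; rewrite /scoreP.
case: hxv => h.
- rewrite (eqc false); last by rewrite h.
  by rewrite (lp_val_opt hxh) -EFinB subrr mule0 ltxx.
- rewrite (eqc true); last by rewrite h.
  by rewrite (lp_val_opt hxh) -EFinB subrr mul0e ltxx.
Qed.

End LP3.

Section BB.
Variables (R : realType) (V : finType) (e : rel V).

Definition Inv (s : bb_state R V) : Prop :=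
 (forall p, p \in bb_branch s -> exists xh : V -> R, lp_opt e p.1 xh /\ sb_choice e p.1 xh p.2) /\
 (OPT R e <= bb_inc s)%E /\
 (forall M, M \in bb_nodes s -> (lp_val R e M < OPT R e)%E ->
    M \in bb_open s \/ exists v, (M, v) \in bb_branch s).

Lemma int_ge_OPT N (x : V -> R) : lp_feas e N x -> integral x -> (OPT R e <= (obj x)%:E)%E.
Proof.
move=> [h1 [h2 h3]] hi; apply: ereal_inf_lbound; exists x => //; split => //.
Qed.

Lemma inv_reach s : bb_reach e s -> Inv s.
Proof.
elim=> [|{}s s' _ [I1 [I2 I3]] st].
- split; [by []|split; [by rewrite leey|]].
  by move=> M hM _; left.
- case: st I1 I2 I3 => {s'}.
  + move=> s0 N [hN hsel] hinc I1 I2 I3; split => //; split => //=.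
    move=> M hM hlt; case: (I3 M hM hlt) => [hMo|]; last by right.
    left; apply: rem_mem => //; apply/negP => /eqP hMN; subst M.
    have := lt_le_trans hlt (le_trans I2 hinc); by rewrite ltxx.
  + move=> s0 N xh [hN hsel] hinc hxh hint I1 I2 I3; split => //; split => /=.
    * exact: int_ge_OPT hxh.1 hint.
    * move=> M hM hlt; case: (I3 M hM hlt) => [hMo|]; last by right.
      left; apply: rem_mem => //; apply/negP => /eqP hMN; subst M.
      move: hlt; rewrite (lp_val_opt hxh) => hlt.
      have := lt_le_trans hlt (int_ge_OPT hxh.1 hint); by rewrite ltxx.
  + move=> s0 N xh v [hN hsel] hinc hxh hnint hsb I1 I2 I3; split; [|split => //].
    * move=> p /=; rewrite inE => /orP [/eqP -> /=|]; last exact: I1.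
      by exists xh.
    * move=> M /=; rewrite !inE => /orP [/eqP ->|/orP [/eqP ->|hM]] hlt.
      -- by left; rewrite eqxx.
      -- by left; rewrite eqxx orbT.
      case: (I3 M hM hlt) => [hMo|[w hw]].
      -- case: (eqVneq M N) => [->|hMN].
         ++ by right; exists v; rewrite mem_head.
         ++ by left; rewrite (rem_mem hMN hMo) !orbT.
      -- by right; exists w; rewrite in_cons hw orbT.
Qed.

End BB.

Theorem lemma3p1 (R : realType) (V : finType) (e : rel V)
    (e_sym : symmetric e) (e_irr : irreflexive e)
    (s : bb_state R V) (hs : bb_complete e s)
    (N : node V) (hN : N \in bb_nodes s)
    (hz : (lp_val R e N < OPT R e)%E) :
  (exists v, (N, v) \in bb_branch s) /\
  forall v, (N, v) \in bb_branch s ->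
    ~ Iset R e N v /\
    (lp_val R e N + (2^-1)%:E <= lp_val R e (child N v false))%E /\
    (lp_val R e N + (2^-1)%:E <= lp_val R e (child N v true))%E.
Proof.
case: hs => hr hopen.
have [I1 [I2 I3]] := inv_reach hr.
split.
- by case: (I3 N hN hz) => //; rewrite hopen in_nil.
- move=> v hv; have [xh [hxh hsb]] := I1 _ hv.
  have hnI := sb_notI hxh hsb hz.
  split => //; split; exact: child_gap hxh hnI.
Qed.
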